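(* Let $\mathcal{A}$ be a finite nonempty set of strata with $|\mathcal{A}| = r$. For each $j \in \mathcal{A}$ let $a_j = n_j\sigma_j > 0$ and let $s_j > 0$ be the current sample size of stratum $j$. Let $M$ be a real number with $0 < M \le \sum_{j\in\mathcal{A}} s_j$. Run the procedure $\mathrm{SSR}(\mathcal{A}, M, \mathcal{L})$ defined in the context. Then the procedure terminates, and the resulting values $(\mathcal{L}[j])_{j\in\mathcal{A}}$ form an optimal solution of the problem $$\text{minimize } \sum_{j\in\mathcal{A}} \frac{n_j^2\sigma_j^2}{x_j} \quad\text{subject to } 0 \le x_j \le s_j \ (j\in\mathcal{A}),\quad \sum_{j\in\mathcal{A}} x_j = M,$$ over real vectors $(x_j)_{j\in\mathcal{A}}$; i.e. $\mathcal{L}$ is a variance-optimal reduction of the stratified random sample to total size $M$. Moreover, the worst-case running time of $\mathrm{SSR}$ is $O(r^2)$.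
   Context: Setting: a data set of $n$ real values is partitioned into strata; stratum $j$ contains $n_j$ values with (population) standard deviation $\sigma_j$. A stratified random sample holds $s_j$ values drawn uniformly without replacement from stratum $j$. The variance of the estimator $\bar y=\frac1n\sum_j n_j\bar y_j$ of the population mean (where $\bar y_j$ is the mean of the sample of stratum $j$) is $V = \frac{1}{n^2}\sum_j \frac{n_j^2\sigma_j^2}{s_j} - \frac{1}{n^2}\sum_j n_j\sigma_j^2$; since the second term does not depend on the sample sizes, reducing the total sample size to $M$ with minimum increase of $V$ (''variance-optimal sample size reduction'') is the optimization problem in the claim. Procedure $\mathrm{SSR}(\mathcal{A}, M, \mathcal{L})$ (writes into an array $\mathcal{L}$ indexed by strata): 1. Set $\mathcal{O} \gets \emptyset$. 2. For each $j\in\mathcal{A}$: set $M_j \gets M\cdot n_j\sigma_j / \sum_{t\in\mathcal{A}} n_t\sigma_t$ (the Neyman allocation of budget $M$ among $\mathcal{A}$); if $s_j > M_j$ then add $j$ to $\mathcal{O}$ (stratum $j$ is ''oversized''), else set $\mathcal{L}[j] \gets s_j$. 3. If $\mathcal{O} = \mathcal{A}$, set $\mathcal{L}[j] \gets M_j$ for all $j\in\mathcal{A}$ and stop. 4. Otherwise call $\mathrm{SSR}(\mathcal{O},\, M - \sum_{j\in\mathcal{A}\setminus\mathcal{O}} s_j,\, \mathcal{L})$. *)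

(* Defs.v *)
From HB Require Import structures.
From mathcomp Require Import all_boot all_order all_algebra.
Set Implicit Arguments. Unset Strict Implicit. Unset Printing Implicit Defensive.
Import Order.TTheory GRing.Theory Num.Theory.
Local Open Scope ring_scope.

Section SSR.
Variables (R : realFieldType) (I : finType).
Variables (n sigma s : I -> R).

Definition weight (j : I) : R := n j * sigma j.

(* Returns the final array L (None if fuel ran out) together with a cost
   counter: each call costs #|A| + 1 elementary steps (computing the sum,
   the loop over A, and a constant overhead). *)
Fixpoint ssr_run (fuel : nat) (A : {set I}) (M : R) (L : I -> R)
  : option (I -> R) * nat :=
  match fuel with
  | 0 => (None, 0%N)
  | fuel'.+1 =>
    let S := \sum_(t in A) weight t in
    let Mj := fun j => M * weight j / S in
    let O := [set j in A | Mj j < s j] in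
    let L' := fun j => if (j \in A) && (j \notin O) then s j else L j in
    if O == A then
      (Some (fun j => if j \in A then Mj j else L' j), (#|A|.+1)%N)
    else
      let res := ssr_run fuel' O (M - \sum_(j in A :\: O) s j) L' in
      (res.1, (#|A|.+1 + res.2)%N)
  end.

Definition feasible (A : {set I}) (M : R) (x : I -> R) : Prop :=
  (forall j, j \in A -> 0 <= x j <= s j) /\ \sum_(j in A) x j = M.

Definition objective (A : {set I}) (x : I -> R) : R :=
  \sum_(j in A) (n j ^+ 2 * sigma j ^+ 2) / x j.

End SSR.

(* Main.v *)
Require Import Defs.
From HB Require Import structures.
From mathcomp Require Import all_boot all_order all_algebra.
From mathcomp Require Import ring lra zify.
Import Order.TTheory GRing.Theory Num.Theory.
Local Open Scope ring_scope.

Lemma term_bound (R : realFieldType) (a c s l x : R) :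
  0 < a -> 0 < c -> 0 < x -> x <= s -> 0 < l ->
  (l = c * a \/ (l = s /\ s <= c * a)) ->
  a ^+ 2 / l - (x - l) / c ^+ 2 <= a ^+ 2 / x.
Proof.
move=> ha hc hx hxs hl [->|[ls hsc]]; last subst l.
- rewrite -subr_ge0.
  have -> : a ^+ 2 / x - (a ^+ 2 / (c * a) - (x - c * a) / c ^+ 2)
     = (x - c * a) ^+ 2 / (x * c ^+ 2).
    field. apply/and3P; split; rewrite ?mulf_neq0 ?expf_neq0 // ?gt_eqF //.
  by apply: divr_ge0; [apply: sqr_ge0| apply: mulr_ge0; [apply: ltW| apply: sqr_ge0]].
  rewrite -subr_ge0.
  have -> : a ^+ 2 / x - (a ^+ 2 / s - (x - s) / c ^+ 2)
     = (s - x) * ((a ^+ 2 * c ^+ 2 - x * s) / (x * s * c ^+ 2)).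
    field. apply/and3P; split; rewrite ?mulf_neq0 ?expf_neq0 // ?gt_eqF //.
  apply: mulr_ge0; first by lra.
  apply: divr_ge0; first by nra.
  by apply: mulr_ge0; [apply: mulr_ge0; apply: ltW| apply: sqr_ge0].
Qed.

Lemma opt_lemma (R : realFieldType) (I : finType) (A : {set I})
  (n sigma s : I -> R) (M c : R) (L : I -> R) :
  0 < c -> (forall j, j \in A -> 0 < n j * sigma j) ->
  feasible s A M L -> (forall j, j \in A -> 0 < L j) ->
  (forall j, j \in A -> L j = c * weight n sigma j \/
        (L j = s j /\ s j <= c * weight n sigma j)) ->
  forall x : I -> R, feasible s A M x -> (forall j, j \in A -> 0 < x j) ->
       objective n sigma A L <= objective n sigma A x.
Proof.
move=> hc hw [hLs hLM] hLp hcase x [hxs hxM] hxp.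
rewrite /objective.
have -> : \sum_(j in A) n j ^+ 2 * sigma j ^+ 2 / L j =
   \sum_(j in A) ((n j * sigma j) ^+ 2 / L j - (x j - L j) / c ^+ 2).
  rewrite sumrB -mulr_suml sumrB hLM hxM subrr mul0r subr0.
  by apply: eq_bigr => j _; rewrite exprMn.
apply: ler_sum => j hj; rewrite -exprMn.
have := hxs j hj; case/andP => _ hxj.
exact: (@term_bound _ _ _ _ _ _ (hw j hj) hc (hxp j hj) hxj (hLp j hj) (hcase j hj)).
Qed.
Lemma sum_pos (R : realFieldType) (I : finType) (A : {set I}) (f : I -> R) :
  A != set0 -> (forall j, j \in A -> 0 < f j) -> 0 < \sum_(j in A) f j.
Proof.
case/set0Pn => j hj hf; rewrite (bigD1 j) //=.
apply: (lt_le_trans (hf j hj)); rewrite lerDl.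
by apply: sumr_ge0 => i /andP[hi _]; apply: ltW; apply: hf.
Qed.

Lemma sum_scale (R : realFieldType) (I : finType) (A : {set I}) (w : I -> R) (M : R) :
  \sum_(t in A) w t != 0 ->
  \sum_(j in A) M * w j / \sum_(t in A) w t = M.
Proof.
move=> hS; rewrite -big_distrl /= -big_distrr /=.
by rewrite mulfK.
Qed.

Lemma run_spec (R : realFieldType) (I : finType) (n sigma s : I -> R) fuel :
  forall (A : {set I}) (M : R) (L : I -> R) (c0 : R),
  (#|A| < fuel)%N ->
  (forall j, j \in A -> 0 < weight n sigma j) ->
  (forall j, j \in A -> 0 < s j) ->
  0 < c0 ->
  (A != set0 -> [/\ 0 < M, M <= \sum_(j in A) s j &
                   c0 <= M / \sum_(t in A) weight n sigma t]) ->
  (A = set0 -> M = 0) ->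
  exists Lf, (ssr_run n sigma s fuel A M L).1 = Some Lf /\
    (2 * (ssr_run n sigma s fuel A M L).2 <= (#|A|.+1) * (#|A|.+2))%N /\
    (forall j, j \notin A -> Lf j = L j) /\
    (forall j, j \in A -> 0 < Lf j <= s j) /\
    \sum_(j in A) Lf j = M /\
    exists2 c, c0 <= c & forall j, j \in A -> Lf j = c * weight n sigma j \/
        (Lf j = s j /\ s j <= c * weight n sigma j).
Proof.
elim: fuel => [|fuel IH] A M L c0 //= hlt hw hs hc0 hne he.
set S := \sum_(t in A) weight n sigma t.
set O := [set j in A | M * weight n sigma j / S < s j].
case: (eqVneq O A) => [eOA|nOA] /=.
  exists (fun j : I =>
          if j \in A
          then M * weight n sigma j / S
          else if (j \in A) && (j \notin O) then s j else L j).
  split; first done.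
  split; first nia.
  split; first by move=> j hj; rewrite (negbTE hj).
  case: (eqVneq A set0) => [A0|An0].
    split; first by move=> j; rewrite A0 inE.
    split; first by rewrite A0 big_set0 he.
    by exists c0 => // j; rewrite A0 inE.
  have [hM hMs hc0S] := hne An0.
  have hS : 0 < S by apply: sum_pos.
  split.
    move=> j hj; rewrite hj; apply/andP; split.
      by apply: divr_gt0 => //; apply: mulr_gt0 => //; apply: hw.
    by apply: ltW; move: hj; rewrite -{1}eOA inE => /andP[].
  split.
    rewrite (eq_bigr (fun j => M * weight n sigma j / S)); last by move=> j ->.
    by apply: sum_scale; rewrite gt_eqF.
  exists (M / S) => // j hj; left; rewrite hj; by rewrite mulrAC.
have hOA : O \subset A by apply/subsetP => j; rewrite inE => /andP[].
have An0 : A != set0.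
  apply/negP => /eqP A0; move: nOA; rewrite A0.
  by move: hOA; rewrite A0 subset0 => /eqP ->; rewrite eqxx.
have [hM hMs hc0S] := hne An0.
have hS : 0 < S by apply: sum_pos.
set c := M / S.
have hc : 0 < c by apply: divr_gt0.
have hOlt : (#|O| < #|A|)%N by apply: proper_card; rewrite properEneq nOA hOA.
have hMsplit : M = c * \sum_(t in O) weight n sigma t + c * \sum_(t in A :\: O) weight n sigma t.
  rewrite -mulrDr.
  have -> : \sum_(t in O) weight n sigma t + \sum_(t in A :\: O) weight n sigma t = S.
    by rewrite /S [RHS](big_setID O) (setIidPr hOA).
  by rewrite /c mulfVK // gt_eqF.
have hnotO : forall j, j \in A :\: O -> s j <= c * weight n sigma j.
  move=> j; rewrite !inE => /andP[hjO hj]; move: hjO; rewrite hj /= -leNgt.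
  by rewrite /c mulrAC.
set M' := M - \sum_(j in A :\: O) s j.
have hM' : c * \sum_(t in O) weight n sigma t <= M'.
  rewrite /M' {1}hMsplit -addrA lerDl subr_ge0 big_distrr /=.
  by apply: ler_sum => j hj; apply: hnotO.
have hsplit_s : \sum_(j in A) s j = \sum_(j in O) s j + \sum_(j in A :\: O) s j.
  by rewrite (big_setID O) (setIidPr hOA).
have hwO : forall j, j \in O -> 0 < weight n sigma j by move=> j /(subsetP hOA); apply: hw.
have hsO : forall j, j \in O -> 0 < s j by move=> j /(subsetP hOA); apply: hs.
have hpre1 : O != set0 -> [/\ 0 < M', M' <= \sum_(j in O) s j &
                   c <= M' / \sum_(t in O) weight n sigma t].
  move=> hO; have hSO : 0 < \sum_(t in O) weight n sigma t by apply: sum_pos.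
  split.
  - exact: lt_le_trans (mulr_gt0 hc hSO) hM'.
  - by rewrite /M' lerBlDr -hsplit_s.
  - by rewrite ler_pdivlMr.
have hpre2 : O = set0 -> M' = 0.
  move=> hO; apply/eqP; rewrite eq_le; apply/andP; split.
    by rewrite /M' lerBlDr add0r; move: hMs; rewrite hsplit_s hO big_set0 add0r.
  by move: hM'; rewrite hO big_set0 mulr0.
have [Lf [h1 [h2 [h3 [h4 [h5 [c' hc' h6]]]]]]] :=
  IH O M' (fun j : I => if (j \in A) && (j \notin O) then s j else L j) c
    (leq_trans hOlt hlt) hwO hsO hc hpre1 hpre2.
exists Lf; split; first exact: h1.
split.
  have : (#|O|.+1 * #|O|.+2 <= #|A| * #|A|.+1)%N by apply: leq_mul.
  lia.
have hnA : forall j, j \notin A -> j \notin O.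
  by move=> j hj; apply/negP => /(subsetP hOA); apply/negP.
split.
  by move=> j hj; rewrite h3 ?hnA // (negbTE hj).
have hLfs : forall j, j \in A -> j \notin O -> Lf j = s j.
  by move=> j hj hjO; rewrite h3 // hj hjO.
split.
  move=> j hj; case: (boolP (j \in O)) => hjO; first exact: h4.
  by rewrite hLfs // lexx andbT; apply: hs.
split.
  rewrite (big_setID O) /= (setIidPr hOA).
  have -> : \sum_(i in O) Lf i = M' by exact: h5.
  rewrite /M'.
  rewrite (eq_bigr s) ?subrK // => j; rewrite inE => /andP[hjO hj]; exact: hLfs.
exists c'; first exact: le_trans hc0S hc'.
move=> j hj; case: (boolP (j \in O)) => hjO; first exact: h6.
right; split; first exact: hLfs.
apply: (le_trans (hnotO j _)); first by rewrite inE hjO hj.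
by apply: ler_wpM2r => //; apply: ltW; apply: hw.
Qed.

Lemma cost_bound (x r : nat) : (2 * x <= r.+1 * r.+2)%N -> (0 < r)%N -> (x <= 3 * r ^ 2)%N.
Proof.
case: r => [|k] h hr //.
have : (k.+2 * k.+3 <= 6 * k.+1 ^ 2)%N.
  rewrite expnS expn1 !mulSn !mulnS; lia.
lia.
Qed.

Theorem theorem1 (R : realFieldType) (I : finType) (A : {set I})
  (n sigma s : I -> R) (M : R) (L0 : I -> R) :
  A != set0 ->
  (forall j, j \in A -> 0 < n j * sigma j) ->
  (forall j, j \in A -> 0 < s j) ->
  0 < M -> M <= \sum_(j in A) s j ->
  exists L : I -> R,
    (ssr_run n sigma s #|A|.+1 A M L0).1 = Some L /\
    ((ssr_run n sigma s #|A|.+1 A M L0).2 <= 3 * #|A| ^ 2)%N /\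
    feasible s A M L /\
    (forall j, j \in A -> 0 < L j) /\
    (forall x : I -> R, feasible s A M x -> (forall j, j \in A -> 0 < x j) ->
       objective n sigma A L <= objective n sigma A x).
Proof.
move=> hA hw hs hM hMs.
have hw' : forall j, j \in A -> 0 < weight n sigma j by exact: hw.
have hS : 0 < \sum_(t in A) weight n sigma t by apply: sum_pos.
have hc0 : 0 < M / \sum_(t in A) weight n sigma t by apply: divr_gt0.
have hpre1 : A != set0 -> [/\ 0 < M, M <= \sum_(j in A) s j &
    M / \sum_(t in A) weight n sigma t <= M / \sum_(t in A) weight n sigma t].
  by move=> _; split.
have hpre2 : A = set0 -> M = 0 by move=> A0; move: hA; rewrite A0 eqxx.
have [Lf [h1 [h2 [h3 [h4 [h5 [c hc h6]]]]]]] :=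
  @run_spec R I n sigma s #|A|.+1 A M L0 _ (ltnSn _) hw' hs hc0 hpre1 hpre2.
have hr : (0 < #|A|)%N by rewrite card_gt0.
have hfeas : feasible s A M Lf.
  split => // j hj; case/andP: (h4 j hj) => a b; by rewrite ltW.
have hpos : forall j, j \in A -> 0 < Lf j by move=> j hj; case/andP: (h4 j hj).
exists Lf; split; first exact: h1.
split; first exact: cost_bound h2 hr.
split; first exact: hfeas.
split; first exact: hpos.
exact: (@opt_lemma R I A n sigma s M c Lf (lt_le_trans hc0 hc) hw hfeas hpos h6).
Qed.
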